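(* Let $\mathcal{R}(z)$ be the stability function of the InDC method constructed with stiffly accurate IRK methods with nonsingular coefficient matrices $A$, using $M$ uniform quadrature points per step excluding the left-most point. Then $\lim_{|z|\to\infty}\mathcal{R}(z)=0$. Consequently, the method is $L$-stable if it is $A$-stable.
   Context: InDC method for an ODE $y'=F(y)$ over one step $[t_n,t_n+H]$: nodes $\tau_m=t_n+mh$, $h=H/M$, $m=0,\dots,M$; $\alpha_j$ ($j=1,\dots,M$) the Lagrange basis polynomials of degree $M-1$ for $\tau_1,\dots,\tau_M$; $S^m(\bar w)=\frac1h\sum_jw_j\int_{\tau_m}^{\tau_{m+1}}\alpha_j$, $S^{c_{mi}}(\bar w)=\frac1h\sum_jw_j\int_{\tau_m}^{\tau_m+c_ih}\alpha_j$, $P^{c_{mi}}(\bar w)=\sum_jw_j\alpha_j(\tau_m+c_ih)$. Prediction: an IRK method (tableau $A,b,c$) applied with step $h$ on each substep from $y_n$, giving $y^{(0)}_m$. Correction $k$: $y^{(k)}_0=y_n$ and $Y_{mi}=y^{(k)}_m+hS^{c_{mi}}(\bar F^{(k-1)})+h\sum_ja_{ij}\Delta K_{mj}$, $y^{(k)}_{m+1}=y^{(k)}_m+hS^m(\bar F^{(k-1)})+h\sum_ib_i\Delta K_{mi}$, $\Delta K_{mi}=F(Y_{mi})-P^{c_{mi}}(\bar F^{(k-1)})$, $\bar F^{(k-1)}=(F(y^{(k-1)}_j))_{j=1}^M$; output $y_{n+1}=y^{(K)}_M$. The stability function $\mathcal{R}$ is defined by $y_{n+1}=\mathcal{R}(z)y_n$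 when the method is applied to $y'=\lambda y$, with $z=\lambda H$ (equivalently up to rescaling $z=\lambda h$). Stiffly accurate: $b^T=e_s^TA$. $L$-stable: $A$-stable with $\mathcal{R}(z)\to0$ as $|z|\to\infty$. *)

(* Defs.v *)
From HB Require Import structures.
From mathcomp Require Import all_boot all_order all_algebra.
Set Implicit Arguments.
Unset Strict Implicit.
Unset Printing Implicit Defensive.
Import Order.TTheory GRing.Theory Num.Theory.
Local Open Scope ring_scope.

Section InDC.
Variable C : numClosedFieldType.

Definition prim (p : {poly C}) : {poly C} :=
  \poly_(i < (size p).+1) (if i is i'.+1 then p`_i' / i%:R else 0).
Definition pint (p : {poly C}) (a b : C) : C := (prim p).[b] - (prim p).[a].

(* Normalised time variable: t_n = 0, h = 1, so tau_m = m and H = M.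
   alpha_j (j : 'I_M) is the Lagrange basis polynomial of degree M-1 for
   the nodes tau_1, ..., tau_M, equal to 1 at tau_{j+1} = j+1. *)
Definition lagr (M : nat) (j : 'I_M) : {poly C} :=
  \prod_(k < M | k != j)
     (('X - (k.+1)%:R%:P) * (((j.+1)%:R - (k.+1)%:R)^-1)%:P).

Variables (s : nat) (A : 'M[C]_s.+1) (b c : 'rV[C]_s.+1) (M K : nat).

Section Step.
Variable z : C.            (* z = lambda * H *)
Definition w : C := z / M%:R.   (* = lambda * h, h = H / M *)

Definition stages (r : 'cV[C]_s.+1) : 'cV[C]_s.+1 :=
  invmx (1%:M - w *: A) *m r.

Definition irk_step (y : C) : C :=
  let Y := stages (const_mx y) in y + \sum_(i < s.+1) b 0 i * (w * Y i 0).

Fixpoint predict (m : nat) : C :=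
  if m is m'.+1 then irk_step (predict m') else 1.

(* One correction sweep; [old j] is y^{(k-1)}_j, only j = 1..M is used.
   h S^{c_mi}(Fbar), h S^m(Fbar), h P^{c_mi}(Fbar) with h F(y) = w y. *)
Definition hSc (old : nat -> C) (m : nat) (i : 'I_s.+1) : C :=
  \sum_(j < M) w * old j.+1 * pint (lagr j) m%:R (m%:R + c 0 i).
Definition hS (old : nat -> C) (m : nat) : C :=
  \sum_(j < M) w * old j.+1 * pint (lagr j) m%:R (m.+1)%:R.
Definition hP (old : nat -> C) (m : nat) (i : 'I_s.+1) : C :=
  \sum_(j < M) w * old j.+1 * (lagr j).[m%:R + c 0 i].

(* Stage equations Y_i = y_m + hS^{c_mi} + sum_j a_ij (w Y_j - hP_j),
   i.e. (I - w A) Y = y_m 1 + hSc - A hP;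
   y_{m+1} = y_m + hS^m + sum_i b_i (w Y_i - hP_i). *)
Definition corr_step (old : nat -> C) (m : nat) (ym : C) : C :=
  let rhs := \col_(i < s.+1) (ym + hSc old m i) - A *m \col_(i < s.+1) hP old m i in
  let Y := stages rhs in
  ym + hS old m + \sum_(i < s.+1) b 0 i * (w * Y i 0 - hP old m i).

Fixpoint correct (old : nat -> C) (m : nat) : C :=
  if m is m'.+1 then corr_step old m' (correct old m') else 1.

Fixpoint sweep (k : nat) : nat -> C :=
  if k is k'.+1 then correct (sweep k') else predict.

End Step.

(* Stability function: y_{n+1} = R(z) y_n, computed with y_n = 1,
   after K correction sweeps. *)
Definition stabfun (z : C) : C := sweep z K M.

End InDC.

Definition lim_infty_zero (C : numClosedFieldType) (R : C -> C) : Prop :=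
  forall e : C, 0 < e -> exists B : C, 0 < B /\ forall z : C, B <= `|z| -> `|R z| < e.

Definition Astable (C : numClosedFieldType) (R : C -> C) : Prop :=
  forall z : C, 'Re z <= 0 -> `|R z| <= 1.

Definition Lstable (C : numClosedFieldType) (R : C -> C) : Prop :=
  Astable R /\ lim_infty_zero R.

(* Main.v *)
Require Import Defs.
From HB Require Import structures.
From mathcomp Require Import all_boot all_order all_algebra ring.
Import Order.TTheory GRing.Theory Num.Theory.
Local Open Scope ring_scope.
Set Implicit Arguments.
Unset Strict Implicit.

Section Bnd.
Variable C : numClosedFieldType.

Definition bnd (f : C -> C) := exists Kc L : C,
  [/\ 0 <= Kc, 1 <= L & forall z, L <= `|z| -> `|f z| <= Kc].

Definition small (f : C -> C) := bnd (fun z => z * f z).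

Lemma bnd_ext f g : (forall z, f z = g z) -> bnd f -> bnd g.
Proof.
move=> e [K [L [K0 L1 H]]]; exists K, L; split => // z hz; rewrite -e; exact: H.
Qed.

Lemma bnd_const a : bnd (fun _ => a).
Proof. by exists `|a|, 1; split. Qed.

Lemma bndD f g : bnd f -> bnd g -> bnd (fun z => f z + g z).
Proof.
move=> [K1 [L1 [K10 L11 H1]]] [K2 [L2 [K20 L21 H2]]].
have L20 : 0 <= L2 by apply: le_trans L21.
have L10 : 0 <= L1 by apply: le_trans L11.
exists (K1 + K2), (L1 + L2); split.
- exact: addr_ge0.
- by rewrite -[1]addr0 lerD.
move=> z hz; apply: le_trans (ler_normD _ _) _; apply: lerD.
  apply: H1; apply: le_trans hz; by rewrite lerDl.
apply: H2; apply: le_trans hz; by rewrite lerDr.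
Qed.

Lemma bndN f : bnd f -> bnd (fun z => - f z).
Proof.
move=> [K [L [K0 L1 H]]]; exists K, L; split => // z hz; rewrite normrN; exact: H.
Qed.

Lemma bndB f g : bnd f -> bnd g -> bnd (fun z => f z - g z).
Proof. by move=> hf hg; apply: bndD => //; apply: bndN. Qed.

Lemma bndM f g : bnd f -> bnd g -> bnd (fun z => f z * g z).
Proof.
move=> [K1 [L1 [K10 L11 H1]]] [K2 [L2 [K20 L21 H2]]].
have L20 : 0 <= L2 by apply: le_trans L21.
have L10 : 0 <= L1 by apply: le_trans L11.
exists (K1 * K2), (L1 + L2); split.
- exact: mulr_ge0.
- by rewrite -[1]addr0 lerD.
move=> z hz; rewrite normrM; apply: ler_pM => //.
  apply: H1; apply: le_trans hz; by rewrite lerDl.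
apply: H2; apply: le_trans hz; by rewrite lerDr.
Qed.

Lemma bndMc f a : bnd f -> bnd (fun z => f z * a).
Proof. by move=> hf; apply: bndM => //; apply: bnd_const. Qed.

Lemma bnd_norm f : bnd f -> bnd (fun z => `|f z|).
Proof.
move=> [K [L [K0 L1 H]]]; exists K, L; split => // z hz; rewrite normr_id; exact: H.
Qed.

Lemma bnd_sum (I : Type) (r : seq I) (P : pred I) (F : I -> C -> C) :
  (forall i, bnd (F i)) -> bnd (fun z => \sum_(i <- r | P i) F i z).
Proof.
move=> hF; elim: r => [|x r IH].
  apply: (@bnd_ext (fun _ => 0)); last exact: bnd_const.
  by move=> z; rewrite big_nil.
case hP: (P x).
  have := bndD (hF x) IH; apply: bnd_ext => z /=; by rewrite big_cons hP.
move: IH; apply: bnd_ext => z /=; by rewrite big_cons hP.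
Qed.

Lemma small_bnd f : small f -> bnd f.
Proof.
move=> [K [L [K0 L1 H]]]; exists K, L; split => // z hz.
apply: le_trans (H z hz); rewrite normrM; apply: ler_peMl => //.
exact: le_trans hz.
Qed.

Lemma small_ext f g : (forall z, f z = g z) -> small f -> small g.
Proof. move=> e; apply: bnd_ext => z; by rewrite e. Qed.

Lemma bnd_small_M f g : bnd f -> small g -> small (fun z => f z * g z).
Proof.
move=> hf hg; apply: (bnd_ext _ (bndM hf hg)) => z /=; by rewrite mulrCA.
Qed.

Lemma small_const0 : small (fun _ => 0).
Proof. apply: (@bnd_ext (fun _ => 0)); last exact: bnd_const.
by move=> z; rewrite mulr0. Qed.

Lemma small_lim f : small f -> lim_infty_zero f.
Proof.
move=> [K [L [K0 L1 H]]] e e0.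
have L0 : 0 < L by apply: lt_le_trans L1.
have Ke : 0 <= K / e by rewrite divr_ge0 // ltW.
exists (L + K / e + 1); split.
  rewrite -addrA addr_gt0 //; apply: lt_le_trans ltr01 _; by rewrite lerDr.
move=> z hz.
have hL : L <= `|z|.
  apply: le_trans hz; rewrite -addrA lerDl addr_ge0 //.
have hKz : K / e < `|z|.
  apply: lt_le_trans hz; rewrite -addrA.
  apply: ltr_pwDl L0 _. by rewrite lerDl.
have z0 : 0 < `|z| by apply: lt_le_trans L0 hL.
have := H z hL; rewrite normrM => h.
rewrite -(ltr_pM2l z0).
apply: le_lt_trans h _.
by rewrite -ltr_pdivrMr.
Qed.

End Bnd.


Section Nrm.
Variable C : numClosedFieldType.
Variable n : nat.

Definition nrm (x : 'cV[C]_n) := \sum_i `|x i 0|.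
Definition mn (B : 'M[C]_n) := \sum_i \sum_j `|B i j|.

Lemma nrm_ge0 (x : 'cV[C]_n) : 0 <= nrm x.
Proof. by apply: sumr_ge0 => i _. Qed.

Lemma mn_ge0 (B : 'M[C]_n) : 0 <= mn B.
Proof. by apply: sumr_ge0 => i _; apply: sumr_ge0. Qed.

Lemma le_nrm (x : 'cV[C]_n) i : `|x i 0| <= nrm x.
Proof.
rewrite /nrm (bigD1 i) //= lerDl; by apply: sumr_ge0.
Qed.

Lemma nrmM (B : 'M[C]_n) (x : 'cV[C]_n) : nrm (B *m x) <= mn B * nrm x.
Proof.
rewrite /nrm /mn mulr_suml; apply: ler_sum => i _; rewrite mxE.
apply: le_trans (ler_norm_sum _ _ _) _; rewrite mulr_suml.
apply: ler_sum => j _; rewrite normrM; apply: ler_wpM2l => //; exact: le_nrm.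
Qed.

Lemma nrmZ a (x : 'cV[C]_n) : nrm (a *: x) = `|a| * nrm x.
Proof. rewrite /nrm mulr_sumr; apply: eq_bigr => i _; by rewrite mxE normrM. Qed.

Lemma nrmB (x y : 'cV[C]_n) : nrm (x - y) <= nrm x + nrm y.
Proof.
rewrite /nrm -big_split; apply: ler_sum => i _; rewrite !mxE.
by apply: le_trans (ler_normD _ _) _; rewrite normrN.
Qed.

Lemma nrm_gt0 (x : 'cV[C]_n) : x != 0 -> 0 < nrm x.
Proof.
move=> x0; rewrite lt_def nrm_ge0 andbT; apply/eqP => h.
move/eqP: x0; apply; apply/matrixP => i j; rewrite (ord1 j) mxE.
apply/normr0_eq0; apply: (psumr_eq0P _ h) => // k _.
Qed.

Lemma stage_key (A : 'M[C]_n) w (Y r : 'cV[C]_n) : A \in unitmx ->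
  (1%:M - w *: A) *m Y = r ->
  `|w| * nrm Y <= mn (invmx A) * (nrm Y + nrm r).
Proof.
move=> uA hY.
have e1 : w *: (A *m Y) = Y - r.
  rewrite -hY mulmxBl mul1mx scalemxAl; by rewrite opprB addrC subrK.
have e2 : w *: Y = invmx A *m (Y - r).
  by rewrite -e1 scalemxAr mulKmx.
rewrite -nrmZ e2; apply: le_trans (nrmM _ _) _.
apply: ler_wpM2l; [exact: mn_ge0 | exact: nrmB].
Qed.

Lemma nrm0 : nrm (0 : 'cV[C]_n) = 0.
Proof. by rewrite /nrm big1 // => i _; rewrite mxE normr0. Qed.

Lemma stage_unit (A : 'M[C]_n) w : A \in unitmx ->
  mn (invmx A) < `|w| -> (1%:M - w *: A) \in unitmx.
Proof.
move=> uA hw; rewrite unitmxE unitfE -det_tr; apply/negP => /det0P [v v0 hv].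
have hx : (1%:M - w *: A) *m v^T = 0.
  have : (v *m (1%:M - w *: A)^T)^T = 0 by rewrite hv trmx0.
  by rewrite trmx_mul trmxK.
have x0 : v^T != 0.
  apply: contra v0 => /eqP h; apply/eqP; by rewrite -(trmxK v) h trmx0.
have := stage_key uA hx; rewrite nrm0 addr0 ler_pM2r ?nrm_gt0 // => h.
by have := lt_le_trans hw h; rewrite ltxx.
Qed.

End Nrm.


Lemma ineq_aux (C : numDomainType) (a y N q : C) : 0 <= y ->
  a * y <= N * (y + q) -> N + N <= a -> a * y <= (N + N) * q.
Proof.
move=> y0 h hN.
have h2 := lerD h h.
have h3 : (N + N) * y <= a * y by apply: ler_wpM2r.
have : a * y + a * y <= a * y + (N + N) * q.
  apply: le_trans h2 _.
  have -> : N * (y + q) + N * (y + q) = (N + N) * y + (N + N) * q.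
    by ring.
  by rewrite lerD2r.
by rewrite lerD2l.
Qed.

Section Method.
Variables (C : numClosedFieldType) (s : nat) (A : 'M[C]_s.+1) (b c : 'rV[C]_s.+1) (M : nat).
Hypothesis M0 : (0 < M)%N.
Hypothesis uA : A \in unitmx.

Lemma normw (z : C) : `|z| = M%:R * `|w M z|.
Proof.
have Mn0 : M%:R != 0 :> C by rewrite pnatr_eq0 -lt0n.
by rewrite /w normrM normfV normr_nat mulrCA mulfV // mulr1.
Qed.

Lemma stages_small (r : C -> 'cV[C]_s.+1) : (forall i, bnd (fun z => r z i 0)) ->
  exists Kc L : C, [/\ 0 <= Kc, 1 <= L & forall z, L <= `|z| ->
     (1%:M - w M z *: A) \in unitmx /\
     forall i, `|z * stages A M z (r z) i 0| <= Kc].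
Proof.
move=> hr.
have : bnd (fun z => nrm (r z)).
  by apply: bnd_sum => i; apply: bnd_norm.
move=> [Kr [Lr [Kr0 Lr1 Hr]]].
set N := mn (invmx A).
have N0 : 0 <= N by apply: mn_ge0.
have Mp : 0 < M%:R :> C by rewrite ltr0n.
have NN1 : 0 <= N + N + 1 by rewrite addr_ge0 // addr_ge0.
exists (M%:R * ((N + N) * Kr)), (Lr + M%:R * (N + N + 1)); split.
- by apply: mulr_ge0; [exact: ltW | apply: mulr_ge0 => //; exact: addr_ge0].
- rewrite -[X in X <= _]addr0; apply: lerD => //. apply: mulr_ge0 (ltW Mp) NN1.
move=> z hz.
have hLr : Lr <= `|z|.
  by apply: le_trans hz; rewrite lerDl; apply: mulr_ge0 => //; exact: ltW.
have hw : N + N + 1 <= `|w M z|.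
  have : M%:R * (N + N + 1) <= `|z|.
    by apply: le_trans hz; rewrite lerDr; apply: le_trans Lr1.
  by rewrite (normw z) ler_pM2l.
have hNw : N < `|w M z|.
  apply: lt_le_trans hw; rewrite -addrA addrC; apply: ltr_pwDl => //.
  exact: ltr_wpDl N0 ltr01.
have hNN : N + N <= `|w M z|.
  by apply: le_trans hw; rewrite lerDl.
have uB := stage_unit uA hNw.
split => // i.
set Y := stages A M z (r z).
have hY : (1%:M - w M z *: A) *m Y = r z by rewrite /Y /stages mulKVmx.
have key := ineq_aux (nrm_ge0 Y) (stage_key uA hY) hNN.
rewrite normrM (normw z) -mulrA ler_pM2l //.
apply: le_trans (ler_wpM2l (normr_ge0 _) (le_nrm Y i)) _.
apply: le_trans key _; apply: ler_wpM2l; [by rewrite addr_ge0 | rewrite -(ger0_norm (nrm_ge0 (r z))); exact: Hr hLr].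
Qed.

End Method.


Section Method2.
Variables (C : numClosedFieldType) (s : nat) (A : 'M[C]_s.+1) (b c : 'rV[C]_s.+1) (M : nat).
Hypothesis M0 : (0 < M)%N.
Hypothesis uA : A \in unitmx.
Hypothesis hc : forall i, c 0 i = \sum_(j < s.+1) A i j.
Hypothesis hb1 : \sum_(j < s.+1) b 0 j = 1.
Hypothesis hbA : forall j, b 0 j = A ord_max j.

Lemma last_stage (z : C) (r : 'cV[C]_s.+1) :
  (1%:M - w M z *: A) \in unitmx ->
  stages A M z r ord_max 0 =
  r ord_max 0 + \sum_k b 0 k * (w M z * stages A M z r k 0).
Proof.
move=> uB; set Y := stages A M z r.
have hY : (1%:M - w M z *: A) *m Y = r by rewrite /Y /stages mulKVmx.
have e : Y = r + w M z *: (A *m Y).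
  by rewrite -hY mulmxBl mul1mx scalemxAl subrK.
rewrite {1}e !mxE mulr_sumr; congr (_ + _); apply: eq_bigr => k _.
by rewrite hbA mulrCA.
Qed.

Lemma c_last : c 0 ord_max = 1.
Proof. by rewrite hc -hb1; apply: eq_bigr => j _; rewrite hbA. Qed.

Lemma corr_eq (z : C) old m ym :
  (1%:M - w M z *: A) \in unitmx ->
  corr_step A b c M z old m ym =
  stages A M z (\col_(i < s.+1) (ym + hSc c M z old m i) -
                A *m \col_(i < s.+1) hP c M z old m i) ord_max 0.
Proof.
move=> uB; rewrite last_stage // /corr_step /=.
set Y := stages _ _ _ _.
rewrite !mxE.
have -> : hSc c M z old m ord_max = hS M z old m.
  rewrite /hSc /hS c_last; apply: eq_bigr => j _.
  by rewrite -natr1.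
have -> : \sum_j A ord_max j * (\col_i hP c M z old m i) j 0 =
          \sum_j b 0 j * hP c M z old m j.
  by apply: eq_bigr => j _; rewrite mxE hbA.
rewrite -!addrA; congr (_ + (_ + _)).
rewrite -sumrN -big_split /=; apply: eq_bigr => j _; ring.
Qed.

Lemma irk_eq (z : C) y :
  (1%:M - w M z *: A) \in unitmx ->
  irk_step A b M z y = stages A M z (const_mx y) ord_max 0.
Proof. by move=> uB; rewrite last_stage // mxE. Qed.

End Method2.


Section Method3.
Variables (C : numClosedFieldType) (s : nat) (A : 'M[C]_s.+1) (b c : 'rV[C]_s.+1) (M : nat).
Hypothesis M0 : (0 < M)%N.
Hypothesis uA : A \in unitmx.
Hypothesis hc : forall i, c 0 i = \sum_(j < s.+1) A i j.
Hypothesis hb1 : \sum_(j < s.+1) b 0 j = 1.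
Hypothesis hbA : forall j, b 0 j = A ord_max j.

Lemma w_old_bnd (f : C -> C) : small f -> bnd (fun z => w M z * f z).
Proof.
move=> hf; have := bndMc (M%:R^-1) hf; apply: bnd_ext => z.
by rewrite /w mulrAC.
Qed.

Lemma corr_small (old : C -> nat -> C) (ym : C -> C) m :
  (forall j, (j < M)%N -> small (fun z => old z j.+1)) -> bnd ym ->
  small (fun z => corr_step A b c M z (old z) m (ym z)).
Proof.
move=> hold hym.
pose r z := \col_(i < s.+1) (ym z + hSc c M z (old z) m i) -
                A *m \col_(i < s.+1) hP c M z (old z) m i.
have hr : forall i, bnd (fun z => r z i 0).
  move=> i.
  apply: (@bnd_ext C (fun z => (ym z + hSc c M z (old z) m i) -
            \sum_k A i k * hP c M z (old z) m k)).
    move=> z; rewrite /r !mxE; congr (_ - _); apply: eq_bigr => k _.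
    by rewrite mxE.
  apply: bndB.
    apply: bndD => //; rewrite /hSc.
    apply: bnd_sum => j; apply: bndMc; apply: w_old_bnd; apply: hold.
    exact: ltn_ord.
  apply: bnd_sum => k; apply: bndM; first exact: bnd_const.
  rewrite /hP; apply: bnd_sum => j; apply: bndMc; apply: w_old_bnd; apply: hold.
  exact: ltn_ord.
have [K [L [K0 L1 H]]] := stages_small M0 uA hr.
exists K, L; split => // z hz; have [uB hb] := H z hz.
by rewrite (corr_eq hc hb1 hbA) //; exact: hb.
Qed.

End Method3.


Section Method4.
Variables (C : numClosedFieldType) (s : nat) (A : 'M[C]_s.+1) (b c : 'rV[C]_s.+1) (M : nat).
Hypothesis M0 : (0 < M)%N.
Hypothesis uA : A \in unitmx.
Hypothesis hc : forall i, c 0 i = \sum_(j < s.+1) A i j.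
Hypothesis hb1 : \sum_(j < s.+1) b 0 j = 1.
Hypothesis hbA : forall j, b 0 j = A ord_max j.

Lemma irk_small (y : C -> C) : bnd y -> small (fun z => irk_step A b M z (y z)).
Proof.
move=> hy.
have hr : forall i, bnd (fun z => (const_mx (y z) : 'cV[C]_s.+1) i 0).
  by move=> i; apply: (@bnd_ext C y) => // z; rewrite mxE.
have [K [L [K0 L1 H]]] := stages_small M0 uA hr.
exists K, L; split => // z hz; have [uB hb] := H z hz.
by rewrite (irk_eq hbA) //; exact: hb.
Qed.

Lemma predict_small m : (0 < m)%N -> small (fun z => predict A b M z m).
Proof.
elim: m => [//|m IH] _ /=.
apply: irk_small; case: m IH => [_|m IH]; first exact: bnd_const.
exact: small_bnd (IH isT).
Qed.

Lemma correct_small (old : C -> nat -> C) :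
  (forall j, (j < M)%N -> small (fun z => old z j.+1)) ->
  forall m, (0 < m)%N -> small (fun z => correct A b c M z (old z) m).
Proof.
move=> hold; elim => [//|m IH] _ /=.
apply: (corr_small M0 uA hc hb1 hbA) => //.
case: m IH => [_|m IH]; first exact: bnd_const.
exact: small_bnd (IH isT).
Qed.

Lemma sweep_small k m : (0 < m)%N -> small (fun z => sweep A b c M z k m).
Proof.
elim: k m => [|k IH] m hm /=; first exact: predict_small.
by apply: correct_small => // j _; apply: IH.
Qed.

End Method4.

Unset Implicit Arguments.
Set Strict Implicit.

Theorem proposition5p1 (C : numClosedFieldType) (s : nat)
  (A : 'M[C]_s.+1) (b c : 'rV[C]_s.+1) (M K : nat) :
  (0 < M)%N ->
  (forall i j, A i j \is Num.real) ->
  (forall j, b 0 j \is Num.real) ->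
  (forall i, c 0 i \is Num.real) ->
  (forall i, c 0 i = \sum_(j < s.+1) A i j) ->
  \sum_(j < s.+1) b 0 j = 1 ->
  A \in unitmx ->
  (forall j, b 0 j = A ord_max j) ->
  lim_infty_zero (stabfun A b c M K) /\
  (Astable (stabfun A b c M K) -> Lstable (stabfun A b c M K)).
Proof.
move=> M0 _ _ _ hc hb1 uA hbA.
have h : lim_infty_zero (stabfun A b c M K).
  apply: small_lim; rewrite /stabfun.
  exact: (sweep_small M0 uA hc hb1 hbA).
by split => // hA; split.
Qed.
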